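(* Let $M$ be a locally finite uniformly discrete metric space which admits a quasi-isometric embedding into an infinite-dimensional Banach space $X$. Then $M$ admits a bilipschitz embedding into $X$.
   Context: A metric space is locally finite if every ball of finite radius has finite cardinality; it is uniformly discrete if $\inf\{d(u,v):u\ne v\}>0$. A map $f:(A,d_A)\to(B,d_B)$ is a quasi-isometric embedding if there are $a_1,a_2>0$, $b\ge 0$ with $a_1d_A(u,v)-b\le d_B(f(u),f(v))\le a_2d_A(u,v)+b$ for all $u,v\in A$. A bilipschitz embedding is a map with $c\,d_A(u,v)\le d_B(f(u),f(v))\le C\,d_A(u,v)$ for constants $0<c\le C<\infty$. *)

(* Defs.v *)
From Stdlib Require Import Reals List.
Open Scope R_scope.

Record MetricSpace := {
  mpt :> Type;
  mdist : mpt -> mpt -> R;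
  mdist_nonneg : forall x y, 0 <= mdist x y;
  mdist_eq0 : forall x y, mdist x y = 0 <-> x = y;
  mdist_sym : forall x y, mdist x y = mdist y x;
  mdist_tri : forall x y z, mdist x z <= mdist x y + mdist y z
}.

Definition locally_finite (M : MetricSpace) : Prop :=
  forall (x : M) (r : R), exists l : list M,
    forall y : M, mdist M x y <= r -> In y l.

Definition uniformly_discrete (M : MetricSpace) : Prop :=
  exists eps : R, 0 < eps /\ forall u v : M, u <> v -> eps <= mdist M u v.

Record NormedSpace := {
  vpt :> Type;
  vzero : vpt;
  vadd : vpt -> vpt -> vpt;
  vopp : vpt -> vpt;
  vscal : R -> vpt -> vpt;
  vnorm : vpt -> R;
  vadd_assoc : forall x y z, vadd x (vadd y z) = vadd (vadd x y) z;
  vadd_comm : forall x y, vadd x y = vadd y x;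
  vadd_0 : forall x, vadd x vzero = x;
  vadd_opp : forall x, vadd x (vopp x) = vzero;
  vscal_1 : forall x, vscal 1 x = x;
  vscal_assoc : forall a b x, vscal a (vscal b x) = vscal (a * b) x;
  vscal_distr_v : forall a x y, vscal a (vadd x y) = vadd (vscal a x) (vscal a y);
  vscal_distr_s : forall a b x, vscal (a + b) x = vadd (vscal a x) (vscal b x);
  vnorm_eq0 : forall x, vnorm x = 0 -> x = vzero;
  vnorm_scal : forall a x, vnorm (vscal a x) = Rabs a * vnorm x;
  vnorm_tri : forall x y, vnorm (vadd x y) <= vnorm x + vnorm y
}.

Definition vdist (X : NormedSpace) (x y : X) : R := vnorm X (vadd X x (vopp X y)).

Definition complete (X : NormedSpace) : Prop :=
  forall u : nat -> X,
    (forall eps, 0 < eps -> exists N, forall n m, (n >= N)%nat -> (m >= N)%nat ->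
        vdist X (u n) (u m) < eps) ->
    exists l : X, forall eps, 0 < eps -> exists N, forall n, (n >= N)%nat ->
        vdist X (u n) l < eps.

Definition Banach (X : NormedSpace) : Prop := complete X.

Fixpoint lin_comb (X : NormedSpace) (c : nat -> R) (v : nat -> X) (n : nat) : X :=
  match n with
  | O => vzero X
  | S k => vadd X (lin_comb X c v k) (vscal X (c k) (v k))
  end.

Definition lin_indep (X : NormedSpace) (v : nat -> X) (n : nat) : Prop :=
  forall c : nat -> R, lin_comb X c v n = vzero X -> forall i, (i < n)%nat -> c i = 0.

Definition infinite_dimensional (X : NormedSpace) : Prop :=
  forall n : nat, exists v : nat -> X, lin_indep X v n.

Definition quasi_isometric_embedding (M : MetricSpace) (X : NormedSpace) (f : M -> X) : Prop :=
  exists a1 a2 b : R, 0 < a1 /\ 0 < a2 /\ 0 <= b /\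
    forall u v : M,
      a1 * mdist M u v - b <= vdist X (f u) (f v) /\
      vdist X (f u) (f v) <= a2 * mdist M u v + b.

Definition bilipschitz_embedding (M : MetricSpace) (X : NormedSpace) (f : M -> X) : Prop :=
  exists c C : R, 0 < c /\ c <= C /\
    forall u v : M,
      c * mdist M u v <= vdist X (f u) (f v) /\
      vdist X (f u) (f v) <= C * mdist M u v.

(* Main.v *)
Require Import Defs.
From Stdlib Require Import Reals List Lra Lia Classical ClassicalEpsilon ZArith Cantor.
Open Scope R_scope.

Arguments vzero {_}. Arguments vadd {_} _ _. Arguments vopp {_} _.
Arguments vscal {_} _ _. Arguments vnorm {_} _.

Lemma v0l {X : NormedSpace} (x : X) : vadd vzero x = x.
Proof. rewrite vadd_comm; apply vadd_0. Qed.

Lemma vadd_cancel {X : NormedSpace} (a x y : X) : vadd a x = vadd a y -> x = y.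
Proof.
  intro H. rewrite <- (v0l x), <- (v0l y), <- (vadd_opp _ a), (vadd_comm _ a (vopp a)).
  rewrite <- !vadd_assoc, H. reflexivity.
Qed.

Lemma vscal_0 {X : NormedSpace} (x : X) : vscal 0 x = vzero.
Proof.
  apply (vadd_cancel (vscal 0 x)). rewrite vadd_0, <- vscal_distr_s, Rplus_0_l. reflexivity.
Qed.

Lemma vscal_v0 {X : NormedSpace} (a : R) : vscal a (@vzero X) = vzero.
Proof. rewrite <- (vscal_0 vzero), vscal_assoc, Rmult_0_r. reflexivity. Qed.

Lemma vopp_scal {X : NormedSpace} (x : X) : vopp x = vscal (-1) x.
Proof.
  apply (vadd_cancel x). rewrite vadd_opp.
  rewrite <- (vscal_1 _ x) at 1. rewrite <- vscal_distr_s. replace (1 + -1) with 0 by ring. rewrite vscal_0; reflexivity.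
Qed.

Lemma vACA {X : NormedSpace} (a b c d : X) :
  vadd (vadd a b) (vadd c d) = vadd (vadd a c) (vadd b d).
Proof.
  rewrite !vadd_assoc. f_equal. rewrite <- !vadd_assoc. f_equal. apply vadd_comm.
Qed.

Definition vsub {X : NormedSpace} (x y : X) : X := vadd x (vscal (-1) y).

Lemma vdist_sub {X : NormedSpace} (x y : X) : vdist X x y = vnorm (vsub x y).
Proof. unfold vdist, vsub. rewrite vopp_scal. reflexivity. Qed.

Lemma vnorm_0 {X : NormedSpace} : vnorm (@vzero X) = 0.
Proof. rewrite <- (vscal_0 vzero), vnorm_scal, Rabs_R0. ring. Qed.

Lemma Rabs_m1 : Rabs (-1) = 1.
Proof. unfold Rabs; destruct Rcase_abs; lra. Qed.

Lemma vnorm_nonneg {X : NormedSpace} (x : X) : 0 <= vnorm x.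
Proof.
  assert (H := vnorm_tri _ x (vscal (-1) x)).
  rewrite vnorm_scal, <- vopp_scal, vadd_opp, vnorm_0 in H.
  rewrite Rabs_m1 in H. lra.
Qed.

Lemma vnorm_opp {X : NormedSpace} (x : X) : vnorm (vscal (-1) x) = vnorm x.
Proof. rewrite vnorm_scal, Rabs_m1; ring. Qed.

Lemma vsub_swap {X : NormedSpace} (x y : X) : vsub y x = vscal (-1) (vsub x y).
Proof.
  unfold vsub. rewrite vscal_distr_v, vscal_assoc, (vadd_comm _ y). f_equal.
  replace (-1 * -1) with 1 by ring. rewrite vscal_1; reflexivity.
Qed.

Lemma vnorm_sub_sym {X : NormedSpace} (x y : X) : vnorm (vsub x y) = vnorm (vsub y x).
Proof. rewrite vsub_swap, vnorm_opp. reflexivity. Qed.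

Lemma vsub_self {X : NormedSpace} (x : X) : vsub x x = vzero.
Proof. unfold vsub. rewrite <- vopp_scal. apply vadd_opp. Qed.

Lemma vnorm_pos {X : NormedSpace} (x : X) : x <> vzero -> 0 < vnorm x.
Proof.
  intro H. destruct (vnorm_nonneg x) as [h|h]; auto. exfalso; apply H, vnorm_eq0; auto.
Qed.

Lemma vscal_add {X : NormedSpace} (a b : R) (x : X) :
  vadd (vscal a x) (vscal b x) = vscal (a + b) x.
Proof. rewrite vscal_distr_s; reflexivity. Qed.

Lemma vsub_add_add {X : NormedSpace} (a b c d : X) :
  vsub (vadd a b) (vadd c d) = vadd (vsub a c) (vsub b d).
Proof. unfold vsub. rewrite vscal_distr_v. apply vACA. Qed.

Lemma vnorm_tri_sub {X : NormedSpace} (x y z : X) :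
  vnorm (vsub x z) <= vnorm (vsub x y) + vnorm (vsub y z).
Proof.
  replace (vsub x z) with (vadd (vsub x y) (vsub y z)). apply vnorm_tri.
  unfold vsub. rewrite <- vadd_assoc. f_equal. rewrite vadd_assoc.
  rewrite (vadd_comm _ (vscal (-1) y) y), <- vopp_scal, vadd_opp. apply v0l.
Qed.
Fixpoint span {X : NormedSpace} (L : list X) (y : X) : Prop :=
  match L with
  | nil => y = vzero
  | w :: L' => exists c z, span L' z /\ y = vadd z (vscal c w)
  end.

Lemma span_0 {X : NormedSpace} (L : list X) : span L vzero.
Proof.
  induction L as [|w L IH]; simpl; auto.
  exists 0, vzero. split; auto. rewrite vscal_0, vadd_0; auto.
Qed.

Lemma span_add {X : NormedSpace} (L : list X) : forall x y, span L x -> span L y -> span L (vadd x y).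
Proof.
  induction L as [|w L IH]; simpl.
  - intros x y -> ->; rewrite vadd_0; auto.
  - intros x y (c1 & z1 & H1 & ->) (c2 & z2 & H2 & ->).
    exists (c1 + c2), (vadd z1 z2). split; [apply IH; auto|]. rewrite vACA, vscal_add; auto.
Qed.

Lemma span_scal {X : NormedSpace} (L : list X) a : forall x, span L x -> span L (vscal a x).
Proof.
  induction L as [|w L IH]; simpl.
  - intros x ->; rewrite vscal_v0; auto.
  - intros x (c1 & z1 & H1 & ->).
    exists (a * c1), (vscal a z1). split; [apply IH; auto|]. rewrite vscal_distr_v, vscal_assoc; auto.
Qed.

Lemma span_sub {X : NormedSpace} (L : list X) x y : span L x -> span L y -> span L (vsub x y).
Proof. intros; apply span_add; auto; apply span_scal; auto. Qed.

Lemma span_In {X : NormedSpace} (L : list X) x : In x L -> span L x.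
Proof.
  induction L as [|w L IH]; simpl; [tauto|].
  intros [<-|H].
  - exists 1, vzero. split; [apply span_0|]. rewrite v0l, vscal_1; auto.
  - exists 0, x. split; auto. rewrite vscal_0, vadd_0; auto.
Qed.

Lemma span_mono {X : NormedSpace} (L1 L2 : list X) :
  (forall x, In x L1 -> span L2 x) -> forall y, span L1 y -> span L2 y.
Proof.
  induction L1 as [|w L IH]; simpl; intros H y Hy.
  - subst; apply span_0.
  - destruct Hy as (c & z & Hz & ->). apply span_add.
    + apply IH; auto.
    + apply span_scal; auto.
Qed.

Fixpoint pre {X : NormedSpace} (u : nat -> X) (i : nat) : list X :=
  match i with O => nil | S i' => u i' :: pre u i' end.

Lemma In_pre {X : NormedSpace} (u : nat -> X) i j : (j < i)%nat -> In (u j) (pre u i).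
Proof.
  induction i; simpl; intros; [lia|].
  destruct (Nat.eq_dec j i); [subst; auto | right; apply IHi; lia].
Qed.

Lemma pre_In {X : NormedSpace} (u : nat -> X) i y : In y (pre u i) -> exists j, (j < i)%nat /\ y = u j.
Proof.
  induction i; simpl; [tauto|]. intros [<-|H].
  - exists i; split; auto; lia.
  - destruct (IHi H) as (j & ? & ?); exists j; split; auto; lia.
Qed.

Lemma pre_ext {X : NormedSpace} (u u' : nat -> X) i :
  (forall j, (j < i)%nat -> u' j = u j) -> pre u' i = pre u i.
Proof.
  induction i; simpl; intros H; auto. rewrite H, IHi; auto.
Qed.

Lemma choice_fun {A B : Type} (P : A -> B -> Prop) :
  (forall a, exists b, P a b) -> exists f : A -> B, forall a, P a (f a).
Proof.
  intro H. exists (fun a => proj1_sig (constructive_indefinite_description _ (H a))).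
  intro a. exact (proj2_sig (constructive_indefinite_description _ (H a))).
Qed.

Lemma min_ex (P : nat -> Prop) : (exists k, P k) -> exists k, P k /\ forall j, (j < k)%nat -> ~ P j.
Proof.
  intros [k Hk]. apply NNPP; intro Hn.
  assert (forall n j, (j <= n)%nat -> ~ P j).
  { induction n; intros j Hj HP.
    - apply Hn; exists j; split; auto; intros; lia.
    - destruct (Nat.eq_dec j (S n)).
      + subst. apply Hn. exists (S n); split; auto. intros j' Hj'; apply IHn; lia.
      + apply (IHn j); auto; lia. }
  apply (H k k); auto.
Qed.

Lemma key_id {X : NormedSpace} (z1 z2 w : X) c1 c2 a :
  vsub (vadd z1 (vscal c1 w)) (vscal a (vadd z2 (vscal c2 w))) =
  vadd (vsub z1 (vscal a z2)) (vscal (c1 - a * c2) w).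
Proof.
  unfold vsub. rewrite vscal_distr_v, vscal_distr_v, !vscal_assoc, vACA. f_equal.
  rewrite vscal_add. f_equal. ring.
Qed.

Lemma steinitz {X : NormedSpace} (L : list X) : forall v : nat -> X,
  (forall i, (i <= length L)%nat -> span L (v i)) ->
  exists i, (i <= length L)%nat /\ span (pre v i) (v i).
Proof.
  induction L as [|w L IH]; simpl; intros v Hv.
  - exists O; split; auto. simpl. apply Hv; auto.
  - set (n := length L) in *.
    destruct (choice_fun (fun i (p : R * X) => (i <= S n)%nat -> span L (snd p) /\ v i = vadd (snd p) (vscal (fst p) w)))
      as [f Hf].
    { intro i. destruct (Compare_dec.le_dec i (S n)) as [h|h].
      - destruct (Hv i h) as (c & z & ? & ?). exists (c, z); auto.
      - exists (0, vzero); intro; lia. }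
    set (c := fun i => fst (f i)). set (z := fun i => snd (f i)).
    assert (Hf' : forall i, (i <= S n)%nat -> span L (z i) /\ v i = vadd (z i) (vscal (c i) w)) by exact Hf.
    clear Hf.
    destruct (classic (exists k, (k <= S n)%nat /\ c k <> 0)) as [Hk|Hk].
    + destruct (min_ex _ Hk) as (k & (Hkn & Hck) & Hmin).
      assert (Hc0 : forall j, (j < k)%nat -> c j = 0).
      { intros j Hj. apply NNPP; intro. apply (Hmin j Hj). split; auto; lia. }
      set (v' := fun i => if (i <? k)%nat then v i else vsub (v (S i)) (vscal (c (S i) / c k) (v k))).
      destruct (IH v') as (i & Hi & Hsp).
      { intros i Hi. unfold v'. destruct (Nat.ltb_spec i k).
        - destruct (Hf' i) as [H1 H2]; [lia|]. rewrite H2, Hc0, vscal_0, vadd_0; auto.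
        - destruct (Hf' (S i)) as [H1 H2]; [lia|]. destruct (Hf' k) as [H3 H4]; [lia|].
          rewrite H2, H4, key_id. replace (c (S i) - c (S i) / c k * c k) with 0 by (field; auto).
          rewrite vscal_0, vadd_0. apply span_sub; auto. apply span_scal; auto. }
      destruct (Nat.ltb_spec i k) as [hik|hik].
      * exists i. split; [lia|].
        rewrite (pre_ext v v') in Hsp.
        -- unfold v' in Hsp. rewrite (proj2 (Nat.ltb_lt i k) hik) in Hsp. auto.
        -- intros j Hj. unfold v'. rewrite (proj2 (Nat.ltb_lt j k)); auto; lia.
      * exists (S i). split; [lia|].
        assert (Hm : forall y, span (pre v' i) y -> span (pre v (S i)) y).
        { apply span_mono. intros x Hx. destruct (pre_In _ _ _ Hx) as (j & Hj & ->).
          unfold v'. destruct (Nat.ltb_spec j k).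
          - apply span_In, In_pre; lia.
          - apply span_sub; [apply span_In, In_pre; lia|]. apply span_scal, span_In, In_pre; lia. }
        apply Hm in Hsp. unfold v' in Hsp.
        replace (i <? k)%nat with false in Hsp by (symmetry; apply Nat.ltb_ge; lia).
        replace (v (S i)) with (vadd (vsub (v (S i)) (vscal (c (S i) / c k) (v k))) (vscal (c (S i) / c k) (v k))).
        -- apply span_add; auto. apply span_scal, span_In, In_pre; lia.
        -- unfold vsub. rewrite <- vadd_assoc, vscal_assoc, vscal_add.
           replace (-1 * (c (S i) / c k) + c (S i) / c k) with 0 by ring.
           rewrite vscal_0, vadd_0; auto.
    + destruct (IH v) as (i & Hi & Hsp).
      { intros i Hi. destruct (Hf' i) as [H1 H2]; [lia|].
        assert (c i = 0) by (apply NNPP; intro; apply Hk; exists i; split; auto; lia).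
        rewrite H2, H, vscal_0, vadd_0; auto. }
      exists i; split; auto.
Qed.
Lemma lin_comb_ext {X : NormedSpace} (c d : nat -> R) (v : nat -> X) n :
  (forall j, (j < n)%nat -> c j = d j) -> lin_comb X c v n = lin_comb X d v n.
Proof.
  induction n; simpl; intros H; auto. rewrite IHn, H; auto.
Qed.

Lemma lin_comb_tail {X : NormedSpace} (c : nat -> R) (v : nat -> X) n : forall m,
  (forall j, (n <= j)%nat -> c j = 0) -> (n <= m)%nat -> lin_comb X c v m = lin_comb X c v n.
Proof.
  intros m H. induction m; intros Hm.
  - replace n with O by lia; auto.
  - destruct (Nat.eq_dec n (S m)). subst; auto.
    simpl. rewrite IHm by lia. rewrite H by lia. rewrite vscal_0, vadd_0; auto.
Qed.

Lemma span_pre_lc {X : NormedSpace} (v : nat -> X) i : forall y,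
  span (pre v i) y -> exists d, y = lin_comb X d v i.
Proof.
  induction i; simpl; intros y Hy.
  - exists (fun _ => 0); auto.
  - destruct Hy as (c & z & Hz & ->). destruct (IHi z Hz) as [d ->].
    exists (fun j => if Nat.eq_dec j i then c else d j).
    f_equal.
    + apply lin_comb_ext. intros j Hj. destruct (Nat.eq_dec j i); auto; lia.
    + destruct (Nat.eq_dec i i); auto; congruence.
Qed.

Lemma indep_not_pre {X : NormedSpace} (v : nat -> X) m i :
  lin_indep X v m -> (i < m)%nat -> ~ span (pre v i) (v i).
Proof.
  intros Hind Him Hs. destruct (span_pre_lc v i _ Hs) as [d Hd].
  set (c := fun j => if (j <? i)%nat then d j else if Nat.eq_dec j i then -1 else 0).
  assert (Hc : c i = 0).
  { apply (Hind c); auto.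
    rewrite (lin_comb_tail c v (S i) m); auto.
    - simpl. rewrite (lin_comb_ext c d). 
      + unfold c. rewrite (proj2 (Nat.ltb_ge i i)) by lia.
        destruct (Nat.eq_dec i i); [|congruence]. rewrite <- Hd.
        rewrite <- vopp_scal. apply vadd_opp.
      + intros j Hj. unfold c. rewrite (proj2 (Nat.ltb_lt j i)); auto.
    - intros j Hj. unfold c. rewrite (proj2 (Nat.ltb_ge j i)) by lia.
      destruct (Nat.eq_dec j i); auto; lia. }
  unfold c in Hc. rewrite (proj2 (Nat.ltb_ge i i)) in Hc by lia.
  destruct (Nat.eq_dec i i); [lra|congruence].
Qed.

Lemma exists_notin {X : NormedSpace} (L : list X) :
  infinite_dimensional X -> exists x, ~ span L x.
Proof.
  intros Hinf. destruct (Hinf (S (length L))) as [v Hv].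
  apply NNPP; intro Hn.
  destruct (steinitz L v) as (i & Hi & Hs).
  - intros i Hi. apply NNPP; intro H. apply Hn; exists (v i); auto.
  - apply (indep_not_pre v (S (length L)) i); auto; lia.
Qed.
Definition closedS {X : NormedSpace} (S : X -> Prop) : Prop :=
  forall z, ~ S z -> exists d, 0 < d /\ forall y, S y -> d <= vnorm (vsub z y).

Definition lbE {X : NormedSpace} (L : list X) (z : X) (r : R) : Prop :=
  forall y, span L y -> r <= vnorm (vsub z y).

Lemma lbE_bound {X : NormedSpace} (L : list X) z : bound (lbE L z).
Proof. exists (vnorm (vsub z vzero)). intros r Hr. apply Hr, span_0. Qed.

Lemma lbE_ne {X : NormedSpace} (L : list X) z : exists r, lbE L z r.
Proof. exists 0. intros y _. apply vnorm_nonneg. Qed.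

Definition D {X : NormedSpace} (L : list X) (z : X) : R :=
  proj1_sig (completeness (lbE L z) (lbE_bound L z) (lbE_ne L z)).

Lemma D_lub {X : NormedSpace} (L : list X) z : is_lub (lbE L z) (D L z).
Proof. unfold D. destruct completeness; auto. Qed.

Lemma D_le {X : NormedSpace} (L : list X) z y : span L y -> D L z <= vnorm (vsub z y).
Proof. intro Hy. apply (proj2 (D_lub L z)). intros r Hr. apply Hr; auto. Qed.

Lemma D_ge {X : NormedSpace} (L : list X) z r : lbE L z r -> r <= D L z.
Proof. intro H. apply (proj1 (D_lub L z)); auto. Qed.

Lemma D_lip {X : NormedSpace} (L : list X) z z' : D L z <= D L z' + vnorm (vsub z z').
Proof.
  cut (D L z - vnorm (vsub z z') <= D L z'). lra.
  apply D_ge. intros y Hy. pose proof (D_le L z y Hy). pose proof (vnorm_tri_sub z z' y). lra.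
Qed.

Lemma D_approx {X : NormedSpace} (L : list X) z : 0 < D L z ->
  exists y, span L y /\ vnorm (vsub z y) < 2 * D L z.
Proof.
  intro Hp. apply NNPP; intro Hn.
  assert (2 * D L z <= D L z). { apply D_ge. intros y Hy. apply Rnot_lt_le. intro; apply Hn; eauto. }
  lra.
Qed.

Lemma vsub_0 {X : NormedSpace} (x : X) : vsub x vzero = x.
Proof. unfold vsub. rewrite vscal_v0, vadd_0; auto. Qed.

Lemma id1 {X : NormedSpace} (x w : X) c : x = vadd (vsub x (vscal c w)) (vscal c w).
Proof.
  unfold vsub. rewrite <- vadd_assoc, vscal_assoc, vscal_add.
  replace (-1 * c + c) with 0 by ring. rewrite vscal_0, vadd_0; auto.
Qed.

Lemma id2 {X : NormedSpace} (x w : X) c c' :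
  vsub (vsub x (vscal c w)) (vsub x (vscal c' w)) = vscal (c' - c) w.
Proof.
  unfold vsub. rewrite vscal_distr_v, !vscal_assoc, vACA, <- vopp_scal, vadd_opp, v0l, vscal_add.
  f_equal. ring.
Qed.

Lemma id3 {X : NormedSpace} (x g w : X) c :
  vsub x (vadd g (vscal c w)) = vsub (vsub x (vscal c w)) g.
Proof.
  unfold vsub. rewrite vscal_distr_v, <- !vadd_assoc. f_equal. apply vadd_comm.
Qed.

Lemma id4 {X : NormedSpace} (g w : X) c : c <> 0 ->
  vadd g (vscal c w) = vscal c (vsub w (vscal (- / c) g)).
Proof.
  intro Hc. unfold vsub. rewrite vscal_distr_v, !vscal_assoc, vadd_comm. f_equal.
  replace (c * -1 * - / c) with 1 by (field; auto). rewrite vscal_1; auto.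
Qed.

Lemma h_cont {X : NormedSpace} (L : list X) x w c :
  continuity_pt (fun c => D L (vsub x (vscal c w))) c.
Proof.
  unfold continuity_pt, continue_in, limit1_in, limit_in. intros eps Heps.
  exists (eps / (vnorm w + 1)). split.
  - apply Rdiv_lt_0_compat; auto. pose proof (vnorm_nonneg w); lra.
  - intros c' [_ Hd]. simpl in *. unfold R_dist in *.
    pose proof (D_lip L (vsub x (vscal c' w)) (vsub x (vscal c w))) as H1.
    pose proof (D_lip L (vsub x (vscal c w)) (vsub x (vscal c' w))) as H2.
    rewrite id2, vnorm_scal in H1, H2.
    assert (Hw := vnorm_nonneg w).
    assert (Habs : Rabs (c - c') = Rabs (c' - c)) by (rewrite <- Rabs_Ropp; f_equal; ring).
    assert (Rabs (c' - c) * vnorm w < eps).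
    { apply Rle_lt_trans with (Rabs (c' - c) * (vnorm w + 1)).
      - apply Rmult_le_compat_l; [apply Rabs_pos|lra].
      - apply (Rmult_lt_compat_r (vnorm w + 1)) in Hd; [|lra].
        unfold Rdiv in Hd. rewrite Rmult_assoc, Rinv_l in Hd; lra. }
    rewrite Habs in H1. apply Rabs_def1; lra.
Qed.

Lemma closed_span {X : NormedSpace} (L : list X) : closedS (span L).
Proof.
  induction L as [|w L IH]; intros x Hx.
  - exists (vnorm x). simpl in Hx. split.
    + apply vnorm_pos; auto.
    + intros y Hy; simpl in Hy; subst. rewrite vsub_0; lra.
  - destruct (classic (span L w)) as [Hw|Hw].
    + assert (Hx' : ~ span L x).
      { intro H. apply Hx. exists 0, x. split; auto. rewrite vscal_0, vadd_0; auto. }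
      destruct (IH x Hx') as (d & Hd & Hb). exists d; split; auto.
      intros y (c & z & Hz & ->). apply Hb. apply span_add; auto. apply span_scal; auto.
    + destruct (IH w Hw) as (dw & Hdw & Hbw).
      assert (Hx0 : x <> vzero) by (intro; subst; apply Hx, span_0).
      set (nx := vnorm x). assert (Hnx : 0 < nx) by (apply vnorm_pos; auto).
      set (h := fun c => D L (vsub x (vscal c w))).
      assert (hpos : forall c, 0 < h c).
      { intro c. assert (~ span L (vsub x (vscal c w))).
        { intro H. apply Hx. exists c, (vsub x (vscal c w)). split; auto. apply id1. }
        destruct (IH _ H) as (d & Hd & Hb). apply Rlt_le_trans with d; auto. apply D_ge; auto. }
      set (K := 2 * nx / dw).
      assert (HK : 0 <= K) by (unfold K; apply Rlt_le, Rdiv_lt_0_compat; lra).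
      destruct (continuity_ab_min h (-K) K) as (mx & Hmin & _).
      { lra. }
      { intros; apply h_cont. }
      exists (Rmin (h mx) nx). split.
      { apply Rmin_glb_lt; auto. }
      intros y (c & g & Hg & ->).
      destruct (Rle_dec (Rabs c) K) as [hc|hc].
      * apply Rle_trans with (h mx); [apply Rmin_l|].
        apply Rle_trans with (h c).
        { apply Hmin. revert hc; unfold Rabs; destruct Rcase_abs; intros; lra. }
        unfold h. rewrite id3. apply D_le; auto.
      * apply Rle_trans with nx; [apply Rmin_r|].
        assert (Hc0 : c <> 0) by (intro; subst; rewrite Rabs_R0 in hc; lra).
        assert (Hy : Rabs c * dw <= vnorm (vadd g (vscal c w))).
        { rewrite (id4 g w c Hc0), vnorm_scal. apply Rmult_le_compat_l; [apply Rabs_pos|].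
          apply Hbw. apply span_scal; auto. }
        assert (Rabs c * dw > 2 * nx).
        { apply Rnot_le_lt in hc. unfold K in hc.
          apply (Rmult_lt_compat_r dw) in hc; auto. unfold Rdiv in hc.
          rewrite Rmult_assoc, Rinv_l in hc; lra. }
        pose proof (vnorm_tri_sub (vadd g (vscal c w)) x vzero) as Ht.
        rewrite !vsub_0 in Ht. rewrite vnorm_sub_sym. fold nx in Ht. lra.
Qed.

Lemma id5 {X : NormedSpace} (x y0 y : X) r : r <> 0 ->
  vsub (vscal (/ r) (vsub x y0)) y = vscal (/ r) (vsub x (vadd y0 (vscal r y))).
Proof.
  intro Hr. unfold vsub. rewrite !vscal_distr_v, !vscal_assoc, <- !vadd_assoc. f_equal. f_equal.
  f_equal. field; auto.
Qed.

Lemma riesz {X : NormedSpace} (L : list X) : infinite_dimensional X ->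
  exists e, vnorm e <= 1 /\ forall y, span L y -> / 2 <= vnorm (vsub e y).
Proof.
  intro Hinf. destruct (exists_notin L Hinf) as [x Hx].
  destruct (closed_span L x Hx) as (d & Hd & Hb).
  assert (HD : 0 < D L x) by (apply Rlt_le_trans with d; auto; apply D_ge; auto).
  destruct (D_approx L x HD) as (y0 & Hy0 & Hr).
  set (r := vnorm (vsub x y0)) in *.
  assert (Hrp : 0 < r) by (apply Rlt_le_trans with (D L x); auto; apply D_le; auto).
  exists (vscal (/ r) (vsub x y0)). split.
  - rewrite vnorm_scal, Rabs_right. fold r. right; field; lra.
    apply Rle_ge, Rlt_le, Rinv_0_lt_compat; auto.
  - intros y Hy. rewrite id5 by lra. rewrite vnorm_scal, Rabs_right.
    2: apply Rle_ge, Rlt_le, Rinv_0_lt_compat; auto.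
    assert (D L x <= vnorm (vsub x (vadd y0 (vscal r y)))).
    { apply D_le, span_add; auto. apply span_scal; auto. }
    apply Rmult_le_reg_l with (2 * r). lra.
    replace (2 * r * (/ r * vnorm (vsub x (vadd y0 (vscal r y))))) with (2 * vnorm (vsub x (vadd y0 (vscal r y)))) by (field; lra).
    replace (2 * r * / 2) with r by field. lra.
Qed.
Lemma nat_unbounded (r : R) : exists n : nat, r <= INR n.
Proof.
  destruct (archimed r) as [H1 _]. exists (Z.to_nat (up r)).
  destruct (Z_le_gt_dec 0 (up r)) as [h|h].
  - rewrite INR_IZR_INZ, Z2Nat.id; auto; lra.
  - apply Rlt_le, Rlt_le_trans with (IZR (up r)); auto.
    apply Rle_trans with 0; [apply IZR_le; lia| apply pos_INR].
Qed.

Lemma real_part a1 a2 b eps d q F :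
  0 < a1 -> 0 < a2 -> 0 <= b -> 0 < eps ->
  a1 * d - b <= F -> F <= a2 * d + b -> F - 2 <= q -> q <= F + 2 -> eps <= d -> / 2 <= q ->
  Rmin (/ (2 * (2 * (b + 2) / a1))) (a1 / 2) * d <= q /\
  q <= Rmax (Rmin (/ (2 * (2 * (b + 2) / a1))) (a1 / 2)) (a2 + (b + 2) / eps) * d.
Proof.
  intros Ha1 Ha2 Hb He H1 H2 H3 H4 Hd Hq.
  set (R0 := 2 * (b + 2) / a1).
  assert (HR0 : 0 < R0) by (unfold R0; apply Rdiv_lt_0_compat; lra).
  assert (HaR : a1 * R0 = 2 * (b + 2)) by (unfold R0; field; lra).
  set (c := Rmin (/ (2 * R0)) (a1 / 2)).
  assert (Hd0 : 0 < d) by lra.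
  split.
  - destruct (Rle_dec d R0) as [h|h].
    + apply Rle_trans with (/ (2 * R0) * d).
      * apply Rmult_le_compat_r; [lra| apply Rmin_l].
      * apply Rle_trans with (/ 2); auto.
        apply Rmult_le_reg_l with (2 * R0); [lra|].
        replace (2 * R0 * (/ (2 * R0) * d)) with d by (field; lra). lra.
    + apply Rle_trans with (a1 / 2 * d).
      * apply Rmult_le_compat_r; [lra| apply Rmin_r].
      * assert (a1 * R0 <= a1 * d) by (apply Rmult_le_compat_l; lra). lra.
  - apply Rle_trans with ((a2 + (b + 2) / eps) * d).
    + assert ((b + 2) * 1 <= (b + 2) / eps * d).
      { unfold Rdiv. rewrite Rmult_assoc. apply Rmult_le_compat_l; [lra|].
        apply Rmult_le_reg_l with eps; auto. rewrite <- Rmult_assoc, Rinv_r; lra. }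
      lra.
    + apply Rmult_le_compat_r; [lra| apply Rmax_r].
Qed.

Fixpoint Es {X : NormedSpace} (Rf : list X -> X) (fm : nat -> X) (k : nat) : list X :=
  match k with
  | O => nil
  | S k' => Rf (fm k' :: pre fm k' ++ Es Rf fm k') :: Es Rf fm k'
  end.

Definition ee {X : NormedSpace} (Rf : list X -> X) (fm : nat -> X) (k : nat) : X :=
  Rf (fm k :: pre fm k ++ Es Rf fm k).

Lemma In_Es {X : NormedSpace} Rf (fm : nat -> X) j k : (j < k)%nat -> In (ee Rf fm j) (Es Rf fm k).
Proof.
  induction k; simpl; intros; [lia|].
  destruct (Nat.eq_dec j k); [subst; left; auto| right; apply IHk; lia].
Qed.

Lemma id6 {X : NormedSpace} (a b ek ej : X) :
  vsub (vadd a ek) (vadd b ej) = vsub ek (vsub (vadd b ej) a).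
Proof.
  unfold vsub. rewrite !vscal_distr_v, !vscal_assoc.
  replace (-1 * -1) with 1 by ring. rewrite vscal_1.
  rewrite (vadd_comm _ (vadd (vscal (-1) b) (vscal (-1) ej)) a), (vadd_assoc _ ek a), (vadd_comm _ ek a).
  reflexivity.
Qed.

Lemma separation {X : NormedSpace} (Rf : list X -> X) (fm : nat -> X)
  (HR : forall L, vnorm (Rf L) <= 1 /\ forall y, span L y -> / 2 <= vnorm (vsub (Rf L) y))
  j k : (j < k)%nat ->
  / 2 <= vnorm (vsub (vadd (fm k) (ee Rf fm k)) (vadd (fm j) (ee Rf fm j))).
Proof.
  intro Hjk. rewrite id6. unfold ee at 1. apply HR.
  apply span_sub.
  - apply span_add; apply span_In; right; apply in_or_app; [left; apply In_pre; auto| right; apply In_Es; auto].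
  - apply span_In; left; auto.
Qed.

Lemma norm_rev {X : NormedSpace} (x y : X) : vnorm x <= vnorm (vadd x y) + vnorm y.
Proof.
  replace x with (vadd (vadd x y) (vscal (-1) y)) at 1.
  - rewrite <- (vnorm_opp y). apply vnorm_tri.
  - rewrite <- vadd_assoc, <- vopp_scal, vadd_opp, vadd_0; auto.
Qed.
Theorem lemmaL (M : MetricSpace) (X : NormedSpace) :
  Banach X -> infinite_dimensional X ->
  locally_finite M -> uniformly_discrete M ->
  (exists f : M -> X, quasi_isometric_embedding M X f) ->
  exists g : M -> X, bilipschitz_embedding M X g.
Proof.
  intros HB Hinf Hlf Hud [f (a1 & a2 & b & Ha1 & Ha2 & Hb & Hf)].
  destruct Hud as (eps & Heps & Hud).
  destruct (classic (exists x0 : M, True)) as [[x0 _]|Hne].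
  2:{ exists (fun _ => vzero). exists 1, 1. split; [lra|split;[lra|]].
      intros u; exfalso; apply Hne; exists u; auto. }
  destruct (choice_fun (fun (n : nat) l => forall y, mdist M x0 y <= INR n -> In y l)
    (fun n => Hlf x0 (INR n))) as [lst Hlst].
  set (m := fun k => nth (snd (Cantor.of_nat k)) (lst (fst (Cantor.of_nat k))) x0).
  assert (Hsurj : forall u, exists k, m k = u).
  { intro u. destruct (nat_unbounded (mdist M x0 u)) as [n Hn].
    destruct (In_nth (lst n) u x0 (Hlst n u Hn)) as (p & _ & Hp).
    exists (Cantor.to_nat (n, p)). unfold m. rewrite Cantor.cancel_of_to. auto. }
  destruct (choice_fun (fun u k => m k = u) Hsurj) as [idx Hidx].
  destruct (choice_fun (fun (L : list X) e => vnorm e <= 1 /\ forall y, span L y -> / 2 <= vnorm (vsub e y))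
    (fun L => riesz L Hinf)) as [Rf HR].
  set (fm := fun k => f (m k)).
  set (g := fun u => vadd (fm (idx u)) (ee Rf fm (idx u))).
  exists g.
  set (R0 := 2 * (b + 2) / a1).
  set (c := Rmin (/ (2 * R0)) (a1 / 2)).
  exists c, (Rmax c (a2 + (b + 2) / eps)).
  assert (Hc : 0 < c).
  { unfold c, R0. apply Rmin_glb_lt; [|lra]. apply Rinv_0_lt_compat.
    apply Rmult_lt_0_compat; [lra|]. apply Rdiv_lt_0_compat; lra. }
  split; [auto|split; [apply Rmax_l|]].
  intros u v.
  destruct (classic (u = v)) as [<-|Huv].
  { rewrite vdist_sub, vsub_self, vnorm_0. rewrite (proj2 (mdist_eq0 M u u) eq_refl). lra. }
  assert (Hd := Hud u v Huv).
  destruct (Hf u v) as [Hf1 Hf2].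
  rewrite vdist_sub in *.
  assert (Hfu : fm (idx u) = f u) by (unfold fm; rewrite Hidx; auto).
  assert (Hfv : fm (idx v) = f v) by (unfold fm; rewrite Hidx; auto).
  assert (Hq : vsub (g u) (g v) = vadd (vsub (f u) (f v)) (vsub (ee Rf fm (idx u)) (ee Rf fm (idx v)))).
  { unfold g. rewrite vsub_add_add, Hfu, Hfv. auto. }
  assert (HE : vnorm (vsub (ee Rf fm (idx u)) (ee Rf fm (idx v))) <= 2).
  { unfold vsub. eapply Rle_trans; [apply vnorm_tri|]. rewrite vnorm_opp.
    unfold ee. pose proof (proj1 (HR (fm (idx u) :: pre fm (idx u) ++ Es Rf fm (idx u)))).
    pose proof (proj1 (HR (fm (idx v) :: pre fm (idx v) ++ Es Rf fm (idx v)))). lra. }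
  assert (Hup : vnorm (vsub (g u) (g v)) <= vnorm (vsub (f u) (f v)) + 2).
  { rewrite Hq. eapply Rle_trans; [apply vnorm_tri|]. lra. }
  assert (Hlo : vnorm (vsub (f u) (f v)) - 2 <= vnorm (vsub (g u) (g v))).
  { rewrite Hq. pose proof (norm_rev (vsub (f u) (f v)) (vsub (ee Rf fm (idx u)) (ee Rf fm (idx v)))). lra. }
  assert (Hsep : / 2 <= vnorm (vsub (g u) (g v))).
  { assert (idx u <> idx v) by (intro H; apply Huv; rewrite <- (Hidx u), <- (Hidx v), H; auto).
    unfold g. destruct (Nat.lt_gt_cases (idx v) (idx u)) as [[h|h] _]; auto.
    - apply separation; auto.
    - rewrite vnorm_sub_sym. apply separation; auto. }
  apply (real_part a1 a2 b eps (mdist M u v) _ (vnorm (vsub (f u) (f v)))); auto.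
Qed.
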